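(* With the notation of the context, as formal power series in the two variables $x$ and $q$, $$\sum_{\lambda\in\mathcal{D}}(-1)^{n_\lambda}x^{m_\lambda+n_\lambda}q^{N_\lambda} =1+\sum_{r=1}^\infty(-1)^r\Big[x^{3r-1}q^{r(3r-1)/2}+x^{3r}q^{r(3r+1)/2}\Big].$$
   Context: $\mathcal{D}$ denotes the set of all partitions into distinct parts (of all nonnegative integers, including the empty partition of $0$). For $\lambda\in\mathcal{D}$, $N_\lambda$ is the integer partitioned by $\lambda$, $n_\lambda$ is the number of parts of $\lambda$, and $m_\lambda$ is the largest part of $\lambda$ (with $m_\lambda=0$ for the empty partition). *)

(* Defs.v *)
From mathcomp Require Import all_boot all_order all_algebra.
Set Implicit Arguments. Unset Strict Implicit. Unset Printing Implicit Defensive.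
Import GRing.Theory Num.Theory.

(* A partition into distinct parts is a finite set of positive integers (its
   parts).  A distinct partition lambda of N has all parts in {1,...,N}, so the
   distinct partitions of N are exactly the sets S : {set 'I_N.+1} with
   0 \notin S and sum of elements = N. *)

Definition n_part (N : nat) (S : {set 'I_N.+1}) : nat := #|S|.
(* m_lambda : largest part (0 for the empty partition) *)
Definition m_part (N : nat) (S : {set 'I_N.+1}) : nat := \max_(i in S) (i : nat).
Definition N_part (N : nat) (S : {set 'I_N.+1}) : nat := \sum_(i in S) (i : nat).

Definition is_distinct_partition_of (N : nat) (S : {set 'I_N.+1}) : bool :=
  (ord0 \notin S) && (N_part S == N).

Local Open Scope ring_scope.

(* Coefficient of x^a q^N in  sum_{lambda in D} (-1)^{n} x^{m+n} q^{N_lambda}. *)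
Definition lhs_coef (a N : nat) : int :=
  \sum_(S : {set 'I_N.+1} | is_distinct_partition_of S && (m_part S + n_part S == a)%N)
     (-1) ^+ n_part S.

(* Coefficient of x^a q^N in
   1 + sum_{r>=1} (-1)^r [x^{3r-1} q^{r(3r-1)/2} + x^{3r} q^{r(3r+1)/2}].
   Only r with r(3r-1)/2 <= N, hence r <= N, can contribute, so the sum over
   r is truncated at N. *)
Definition rhs_coef (a N : nat) : int :=
  ((a == 0%N) && (N == 0%N))%:R
  + \sum_(1 <= r < N.+1)
      (-1) ^+ r * ( (((a == 3 * r - 1)%N) && (N == r * (3 * r - 1) %/ 2)%N)%:R
                  + (((a == 3 * r)%N) && (N == r * (3 * r + 1) %/ 2)%N)%:R ).

(* Main.v *)
Require Import Defs.
From mathcomp Require Import all_boot all_order all_algebra.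
From mathcomp Require Import zify.
Set Implicit Arguments. Unset Strict Implicit. Unset Printing Implicit Defensive.

Fixpoint run (Q : nat -> bool) (M : nat) : nat :=
  if M is M'.+1 then (if Q M then (run Q M').+1 else 0) else 0.

Lemma run_le (Q : nat -> bool) M : run Q M <= M.
Proof. elim: M => //= M IH; case: (Q _) => //. Qed.

Lemma run_in (Q : nat -> bool) M j : j < run Q M -> Q (M - j).
Proof.
elim: M j => //= M IH [|j]; case H: (Q _) => //= hj.
by rewrite subSS; apply: IH.
Qed.

Lemma run_out (Q : nat -> bool) M : run Q M < M -> ~~ Q (M - run Q M).
Proof.
elim: M => //= M IH; case H: (Q _) => /=.
  by rewrite ltnS subSS => /IH.
by rewrite subn0 H.
Qed.

Lemma run_ge (Q : nat -> bool) M k : k <= M -> (forall j, j < k -> Q (M - j)) -> k <= run Q M.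
Proof.
move=> hk hj; case: (leqP k (run Q M)) => // hlt.
have := run_out (leq_trans hlt hk); by rewrite hj.
Qed.

Lemma run_leq (Q : nat -> bool) M k : ~~ Q (M - k) -> run Q M <= k.
Proof.
move=> h; case: (leqP (run Q M) k) => // hlt.
by move: (run_in hlt); rewrite (negbTE h).
Qed.


Ltac prune := repeat match goal with
  | H : ?TT |- _ => lazymatch TT with
      | is_true (leq _ _) => fail
      | @eq _ _ _ => fail
      | is_true (@eq_op _ _ _) => fail
      | is_true (~~ (@eq_op _ _ _)) => fail
      | ~ (@eq _ _ _) => fail
      | _ => clear H
      end
  end.
Ltac nlia := prune; lia.

Section F.
Variable N : nat.
Local Notation T := {set 'I_N.+1}.

Definition o (i : nat) : 'I_N.+1 := inord i.
Lemma val_o i : i <= N -> nat_of_ord (o i) = i.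
Proof. by move=> h; rewrite /o inordK. Qed.
Lemma eq_o (x : 'I_N.+1) i : i <= N -> (x == o i) = (nat_of_ord x == i).
Proof. move=> h; apply/eqP/eqP => [->|<-]; [exact: val_o | by rewrite /o inord_val]. Qed.
Lemma le_N (x : 'I_N.+1) : x <= N.
Proof. by rewrite -ltnS ltn_ord. Qed.

Definition mem_nat (S : T) (i : nat) := (i <= N) && (o i \in S).
Lemma mem_natE S (x : 'I_N.+1) : mem_nat S x = (x \in S).
Proof. by rewrite /mem_nat le_N /o inord_val. Qed.
Lemma mem_nat_le S i : mem_nat S i -> i <= N.
Proof. by case/andP. Qed.
Lemma set_eq_nat (A B : T) : (forall i, mem_nat A i = mem_nat B i) -> A = B.
Proof. by move=> h; apply/setP => x; rewrite -!mem_natE. Qed.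
Lemma mem_natU1 (A : T) u i : u <= N ->
  mem_nat (o u |: A) i = (i == u) || mem_nat A i.
Proof.
move=> hu; rewrite /mem_nat; case: (leqP i N) => hi /=.
  by rewrite in_setU1 eq_o // val_o.
have : i != u by apply/eqP=> e; move: hi; rewrite e ltnNge hu.
by move/negbTE=> ->.
Qed.
Lemma mem_natD1 (A : T) u i : u <= N ->
  mem_nat (A :\ o u) i = (i != u) && mem_nat A i.
Proof.
move=> hu; rewrite /mem_nat; case: (leqP i N) => hi /=.
  by rewrite in_setD1 eq_o // val_o.
by rewrite andbF.
Qed.
Lemma mem_nat_ne0 (A : T) i : mem_nat A i -> A != set0.
Proof. by case/andP=> _ h; apply/set0Pn; exists (o i). Qed.

Definition smin (S : T) : nat :=
  if [pick x in S] is Some x then val [arg min_(i < x in S) (i : nat)] else 0.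

Lemma smin_le S i : mem_nat S i -> smin S <= i.
Proof.
case/andP=> hi hS; rewrite /smin; case: pickP => [x xS|/(_ (o i))]; last by rewrite hS.
case: arg_minnP => // y yS ymin; by rewrite -(val_o hi) ymin.
Qed.
Lemma smin_in S : S != set0 -> mem_nat S (smin S).
Proof.
case/set0Pn => x0 x0S; rewrite /smin; case: pickP => [x xS|/(_ x0)]; last by rewrite x0S.
by case: arg_minnP => // y yS _; rewrite mem_natE.
Qed.
Lemma smin_eq S y : mem_nat S y -> (forall i, mem_nat S i -> y <= i) -> smin S = y.
Proof.
move=> hy hall; apply/eqP; rewrite eqn_leq smin_le //=; apply: hall; apply: smin_in.
exact: mem_nat_ne0 hy.
Qed.

Lemma max_ge S i : mem_nat S i -> i <= m_part S.
Proof.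
case/andP=> hi hS; rewrite /m_part -{1}(val_o hi).
exact: (@leq_bigmax_cond _ (fun x => x \in S) (fun x : 'I_N.+1 => nat_of_ord x) (o i) hS).
Qed.
Lemma max_in S : S != set0 -> mem_nat S (m_part S).
Proof.
move=> hS; have : 0 < #|S| by rewrite card_gt0.
case/(eq_bigmax_cond (fun x : 'I_N.+1 => nat_of_ord x)) => y yS; rewrite /m_part => ->.
by rewrite mem_natE.
Qed.
Lemma max_eq S y : mem_nat S y -> (forall i, mem_nat S i -> i <= y) -> m_part S = y.
Proof.
move=> hy hall; apply/eqP; rewrite eqn_leq max_ge // andbT.
by apply/bigmax_leqP => x xS; apply: hall; rewrite mem_natE.
Qed.

Lemma NpartU1 (A : T) u : u <= N -> ~~ mem_nat A u -> N_part (o u |: A) = u + N_part A.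
Proof.
move=> hu hA; rewrite /N_part big_setU1 /= ?val_o //.
by move: hA; rewrite /mem_nat hu.
Qed.
Lemma NpartD1 (A : T) u : mem_nat A u -> N_part A = u + N_part (A :\ o u).
Proof.
case/andP=> hu hA; rewrite /N_part (big_setD1 _ hA) /= val_o //.
Qed.
Lemma cardU1 (A : T) u : u <= N -> ~~ mem_nat A u -> #|o u |: A| = (#|A|).+1.
Proof. move=> hu hA; rewrite cardsU1; move: hA; rewrite /mem_nat hu /= => ->; done. Qed.
Lemma cardD1 (A : T) u : mem_nat A u -> #|A| = (#|A :\ o u|).+1.
Proof. case/andP=> hu hA; by rewrite (cardsD1 (o u)) hA. Qed.


Lemma mem0E (S : T) : (ord0 \in S) = mem_nat S 0.
Proof. by rewrite -[0]/(nat_of_ord (@ord0 N)) mem_natE. Qed.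

Definition kr (S : T) := run (mem_nat S) (m_part S).
Definition fixedb (S : T) := (S == set0) ||
  ((smin S + kr S == (m_part S).+1) && ((smin S == kr S) || (smin S == (kr S).+1))).
Definition fA (S : T) := o (m_part S).+1 |: ((S :\ o (smin S)) :\ o (m_part S - smin S + 1)).
Definition fB (S : T) := o (kr S) |: (o (m_part S - kr S) |: (S :\ o (m_part S))).
Definition fr (S : T) := if smin S <= kr S then fA S else fB S.

Definition goodI (S R : T) := [/\ is_distinct_partition_of R, ~~ fixedb R, fr R = S,
  m_part R + #|R| = m_part S + #|S| & (#|R|).+1 = #|S| \/ #|R| = (#|S|).+1].

Lemma caseA (S : T) : is_distinct_partition_of S -> ~~ fixedb S -> smin S <= kr S ->
  goodI S (fA S).
Proof.
move=> hv hnf hsk.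
have hne : S != set0 by move: hnf; rewrite /fixedb; case: (S == set0).
move: hnf; rewrite /fixedb (negbTE hne) /= => hnw.
case/andP: hv; rewrite mem0E => h0 /eqP hN.
rewrite /fA; move: hsk hnw.
set m := m_part S; set s := smin S; set k := kr S => hsk hnw.
have hm : mem_nat S m := max_in hne.
have hs : mem_nat S s := smin_in hne.
have hle : forall i, mem_nat S i -> i <= m by move=> i; apply: max_ge.
have hsle : forall i, mem_nat S i -> s <= i by move=> i; apply: smin_le.
have hpos : forall i, mem_nat S i -> 0 < i.
  by move=> [|i] //; rewrite (negbTE h0).
have hkm : k <= m := run_le _ _.
have hrun : forall j, j < k -> mem_nat S (m - j) by move=> j; apply: run_in.
have hm1 := hpos _ hm; have hs1 := hpos _ hs.
have hk1 : 0 < k.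
  by apply: run_ge => // j; rewrite ltnS leqn0 => /eqP ->; rewrite subn0.
have hsk1 : s + k <= m.+1.
  have := hsle _ (hrun k.-1 ltac:(nlia)); nlia.
have h2s : 2 * s <= m.
  case: (ltnP m (2 * s)) => // h; exfalso; move: hnw.
  have -> : s + k == m.+1 by apply/eqP; nlia.
  by have -> : s == k by apply/eqP; nlia.
set t := m - s + 1.
have ht : mem_nat S t.
  have := hrun (s - 1) ltac:(nlia); by have -> : m - (s - 1) = t by rewrite /t; nlia.
have hsN := mem_nat_le hs; have htN := mem_nat_le ht; have hmN := mem_nat_le hm.
have hmS1 : mem_nat S m.+1 = false.
  by apply/negP => /hle; rewrite ltnn.
set R := (S :\ o s) :\ o t.
have hR : forall i, mem_nat R i = (i != t) && ((i != s) && mem_nat S i).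
  by move=> i; rewrite !mem_natD1.
have hRs : mem_nat (S :\ o s) t by rewrite mem_natD1 // ht andbT; apply/eqP; nlia.
have hN1 := NpartD1 hs; have hN2 := NpartD1 hRs.
have hc1 := cardD1 hs; have hc2 := cardD1 hRs.
have hmN1 : m.+1 <= N.
  have : t + s = m.+1 by rewrite /t; nlia.
  rewrite hN1 hN2 -/R in hN; nlia.
have hRm : ~~ mem_nat R m.+1 by rewrite hR hmS1 !andbF.
have hT : forall i, mem_nat (o m.+1 |: R) i = (i == m.+1) || mem_nat R i.
  by move=> i; rewrite mem_natU1.
set TT := o m.+1 |: R.
have hTne : TT != set0 by apply: (@mem_nat_ne0 _ m.+1); rewrite hT eqxx.
have hmT : m_part TT = m.+1.
  apply: max_eq; first by rewrite hT eqxx.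
  move=> i; rewrite hT; case/orP => [/eqP -> //|]; rewrite hR => /andP[_ /andP[_ /hle]]; nlia.
have hkT : kr TT = s.
  rewrite /kr hmT; apply/eqP; rewrite eqn_leq; apply/andP; split.
    apply: run_leq; have -> : m.+1 - s = t by rewrite /t; nlia.
    rewrite hT hR eqxx /=; apply/negP => /orP [/eqP|]; rewrite /t; nlia.
  apply: run_ge; first nlia.
  move=> [|j] hj; first by rewrite subn0 hT eqxx.
  rewrite hT hR; apply/orP; right; apply/and3P; split; first (apply/eqP; rewrite /t; lia).
    by apply/eqP; nlia.
  by rewrite subSS; apply: hrun; nlia.
have hsT : s < smin TT.
  have := smin_in hTne; rewrite hT hR.
  case/orP => [/eqP -> | /andP [_ /andP [hne' hin]]]; first nlia.
  by rewrite ltn_neqAle eq_sym hne' hsle.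
have hfr : fr TT = fB TT by rewrite /fr hkT leqNgt hsT.
split.
- apply/andP; split; first by rewrite mem0E hT hR (negbTE h0) !andbF orbF; apply/eqP; nlia.
  apply/eqP; rewrite NpartU1 //; rewrite hN1 hN2 -/R in hN; rewrite /t in hN *; nlia.

- rewrite /fixedb (negbTE hTne) /= hkT hmT.
  apply/negP => /andP [/eqP e /orP [] /eqP e']; nlia.
- rewrite hfr /fB hkT hmT; apply: set_eq_nat => i.
  rewrite mem_natU1 // mem_natU1; last nlia.
  rewrite mem_natD1 // hT hR.
  have -> : m.+1 - s = t by rewrite /t; nlia.
  case: (eqVneq i s) => [->|ns] /=; first by rewrite hs.
  case: (eqVneq i t) => [->|nt] /=; first by rewrite ht.
  by case: (eqVneq i m.+1) => [->|nm] /=; first by rewrite hmS1.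
- rewrite hmT cardU1 // hc1 hc2 -/R; nlia.
- by left; rewrite cardU1 // hc1 hc2.
Qed.

Lemma caseB (S : T) : is_distinct_partition_of S -> ~~ fixedb S -> kr S < smin S ->
  goodI S (fB S).
Proof.
move=> hv hnf hsk.
have hne : S != set0 by move: hnf; rewrite /fixedb; case: (S == set0).
move: hnf; rewrite /fixedb (negbTE hne) /= => hnw.
case/andP: hv; rewrite mem0E => h0 /eqP hN.
rewrite /fB; move: hsk hnw.
set m := m_part S; set s := smin S; set k := kr S => hsk hnw.
have hm : mem_nat S m := max_in hne.
have hs : mem_nat S s := smin_in hne.
have hle : forall i, mem_nat S i -> i <= m by move=> i; apply: max_ge.
have hsle : forall i, mem_nat S i -> s <= i by move=> i; apply: smin_le.
have hpos : forall i, mem_nat S i -> 0 < i.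
  by move=> [|i] //; rewrite (negbTE h0).
have hkm : k <= m := run_le _ _.
have hrun : forall j, j < k -> mem_nat S (m - j) by move=> j; apply: run_in.
have hm1 := hpos _ hm; have hs1 := hpos _ hs.
have hk1 : 0 < k.
  by apply: run_ge => // j; rewrite ltnS leqn0 => /eqP ->; rewrite subn0.
have hsk1 : s + k <= m.+1.
  have := hsle _ (hrun k.-1 ltac:(nlia)); nlia.
have hkm1 : k < m by nlia.
set u := m - k.
have hu : ~~ mem_nat S u := run_out hkm1.
have hw : s + k = m.+1 -> s != k.+1.
  move=> e; apply/negP => e'; move: hnw; rewrite e eqxx e' orbT //.
have hsu : s + k != m.
  apply/negP => /eqP e; move: hu; have -> : u = s by rewrite /u; nlia.
  by rewrite hs.
have hku : k < u.
  case: (eqVneq (s + k) m.+1) => [e|ne].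
    have := hw e; move/eqP => ne'; rewrite /u; nlia.
  move/eqP: hsu => hsu; move/eqP: ne => ne; rewrite /u; nlia.
have hkS : mem_nat S k = false.
  by apply/negP => /hsle; nlia.
have hmN := mem_nat_le hm.
set R := S :\ o m.
have hR : forall i, mem_nat R i = (i != m) && mem_nat S i.
  by move=> i; rewrite !mem_natD1.
have hRu : ~~ mem_nat R u by rewrite hR (negbTE hu) andbF.
have hUk : ~~ mem_nat (o u |: R) k.
  by rewrite mem_natU1 ?hR ?hkS ?andbF ?orbF; [apply/eqP; lia| rewrite /u; lia].
have huN : u <= N by rewrite /u; nlia.
have hkN : k <= N by nlia.
have hN1 := NpartD1 hm; have hc1 := cardD1 hm.
set TT := o k |: (o u |: R).
have hT : forall i, mem_nat TT i = (i == k) || ((i == u) || ((i != m) && mem_nat S i)).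
  by move=> i; rewrite !mem_natU1 // hR.
have hTne : TT != set0 by apply: (@mem_nat_ne0 _ k); rewrite hT eqxx.
have hmT : m_part TT = m - 1.
  apply: max_eq.
    rewrite hT; case: (eqVneq k 1) => [e|ne].
      by rewrite /u e eqxx orbT.
    apply/orP; right; apply/orP; right; apply/andP; split; first (apply/eqP; lia).
    by apply: hrun; nlia.
  move=> i; rewrite hT => /orP [/eqP ->|/orP [/eqP ->|/andP [/eqP ne /hle]]]; rewrite /u; nlia.
have hsT : smin TT = k.
  apply: smin_eq; first by rewrite hT eqxx.
  move=> i; rewrite hT => /orP [/eqP ->|/orP [/eqP ->|/andP [_ /hsle]]]; nlia.
have hkT : k <= kr TT.
  rewrite /kr hmT; apply: run_ge; first nlia.
  move=> j hj; rewrite hT; case: (eqVneq j.+1 k) => [e|ne].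
    by apply/orP; right; apply/orP; left; apply/eqP; rewrite /u; nlia.
  apply/orP; right; apply/orP; right; apply/andP; split; first (apply/eqP; lia).
  have -> : m - 1 - j = m - j.+1 by nlia.
  by apply: hrun; nlia.
have hkTm : kr TT <= m - 1 by rewrite /kr hmT; apply: run_le.
have hfr : fr TT = fA TT by rewrite /fr hsT hkT.
split.
- apply/andP; split; first by rewrite mem0E hT (negbTE h0) andbF !orbF; apply/negP => /orP [] /eqP; nlia.
  apply/eqP; rewrite NpartU1 // NpartU1 //; rewrite hN1 -/R in hN; rewrite /u in hN *; nlia.
- rewrite /fixedb (negbTE hTne) /= hsT hmT.
  apply/negP => /andP [/eqP e /orP [] /eqP e']; rewrite /u in hku; nlia.
- rewrite hfr /fA hsT hmT; apply: set_eq_nat => i.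
  have -> : (m - 1).+1 = m by nlia.
  have -> : m - 1 - k + 1 = u by rewrite /u; nlia.
  rewrite mem_natU1 // mem_natD1 // mem_natD1 // hT.
  case: (eqVneq i m) => [->|nm] /=; first by rewrite hm.
  case: (eqVneq i u) => [->|nu] /=; first by rewrite (negbTE hu).
  by case: (eqVneq i k) => [->|nk] /=; first by rewrite hkS.
- rewrite hmT cardU1 // cardU1 // hc1 -/R; nlia.
- by right; rewrite cardU1 // cardU1 // hc1.
Qed.

Lemma invol (S : T) : is_distinct_partition_of S -> ~~ fixedb S -> goodI S (fr S).
Proof.
move=> hv hnf; rewrite /fr; case: leqP => h; [exact: caseA | exact: caseB].
Qed.

End F.



Lemma sum_closed s k : 2 * (\sum_(s <= i < s + k) i) + k = k * (2 * s + k).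
Proof.
elim: k => [|k IH]; first by rewrite !addn0 big_geq // mul0n muln0.
rewrite [s + k.+1]addnS big_nat_recr /=; last by rewrite leq_addr.
nia.
Qed.

Section G.
Variable N : nat.
Local Notation T := {set 'I_N.+1}.

Definition Iv s m : T := [set x : 'I_N.+1 | s <= x <= m].

Lemma memIv s k i : 0 < k -> s + k <= N.+1 ->
  mem_nat (Iv s (s + k - 1)) i = (s <= i) && (i < s + k).
Proof.
move=> hk0 hk; rewrite /mem_nat inE; case: (leqP i N) => h /=.
  rewrite val_o //; apply/idP/idP => /andP [h1 h2]; apply/andP; split; nlia.
by apply/esym/negP => /andP [_ h2]; nlia.
Qed.

Lemma sumIv s k (F : nat -> nat) : 0 < k -> s + k <= N.+1 ->
  \sum_(x in Iv s (s + k - 1)) F x = \sum_(s <= i < s + k) F i.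
Proof.
move=> hk0 hk.
rewrite (eq_bigl (fun x : 'I_N.+1 => (s <= x) && (x < s + k))); last first.
  by move=> x; rewrite inE; apply/idP/idP => /andP [h1 h2]; apply/andP; split; nlia.
rewrite -(big_mkord (fun i => (s <= i) && (i < s + k)) F).
rewrite (big_cat_nat (n := s)) //=; last by nlia.
rewrite (big_cat_nat (m := s) (n := s + k)) //=; last by rewrite leq_addr.
rewrite big1_seq ?add0n; last by move=> i /andP [/andP [h1 h2]]; rewrite mem_index_iota; nlia.
rewrite [X in _ + X]big1_seq ?addn0; last by move=> i /andP [/andP [h1 h2]]; rewrite mem_index_iota; nlia.
rewrite big_seq_cond [RHS]big_seq_cond; apply: eq_bigl => i.
by rewrite mem_index_iota; apply/idP/idP => /andP [/andP [h1 h2] _]; rewrite ?h1 ?h2.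
Qed.

Lemma Iv_props s k : 0 < s -> 0 < k -> s + k <= N.+1 ->
  let X := Iv s (s + k - 1) in
  [/\ ~~ mem_nat X 0, 2 * N_part X + k = k * (2 * s + k), #|X| = k,
      m_part X = s + k - 1 & smin X = s /\ kr X = k].
Proof.
move=> hs hk hN X.
have hm : forall i, mem_nat X i = (s <= i) && (i < s + k) by move=> i; apply: memIv.
have hmX : m_part X = s + k - 1.
  apply: max_eq; first by rewrite hm; apply/andP; split; nlia.
  by move=> i; rewrite hm => /andP [h1 h2]; nlia.
split => //.
- by rewrite hm; apply/negP => /andP [h1 h2]; nlia.
- rewrite /N_part /X; have := @sumIv s k (fun i => i) hk hN; move=> /= ->; exact: sum_closed.
- rewrite -sum1_card /X; have := @sumIv s k (fun _ => 1) hk hN; move=> /= ->.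
  rewrite sum_nat_const_nat; nlia.
split.
  apply: smin_eq; first by rewrite hm; apply/andP; split; nlia.
  by move=> i; rewrite hm => /andP [h1 h2]; nlia.
  rewrite /kr hmX; apply/eqP; rewrite eqn_leq; apply/andP; split.
    by apply: run_leq; rewrite hm; apply/negP => /andP [h1 h2]; nlia.
  apply: run_ge; first by nlia.
  by move=> j hj; rewrite hm; apply/andP; split; nlia.
Qed.

End G.
Import GRing.Theory.



Lemma p1E N r : (N == r * (3 * r - 1) %/ 2) = (2 * N == r * (3 * r - 1)).
Proof.
have : odd (r * (3 * r - 1)) = false.
  rewrite oddM; case: r => [|r] //.
  have -> : 3 * r.+1 - 1 = (3 * r).+2 by nlia.
  by rewrite !oddS oddM /=; case: (odd r).
move=> h; have h2 := modn2 (r * (3 * r - 1)); rewrite h in h2; apply/eqP/eqP; nlia.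
Qed.

Lemma p2E N r : (N == r * (3 * r + 1) %/ 2) = (2 * N == r * (3 * r + 1)).
Proof.
have : odd (r * (3 * r + 1)) = false.
  by rewrite oddM addn1 oddS oddM /=; case: (odd r).
move=> h; have h2 := modn2 (r * (3 * r + 1)); rewrite h in h2; apply/eqP/eqP; nlia.
Qed.

Local Open Scope ring_scope.

Lemma sum_single lo hi r0 (g : nat -> int) : (forall r, r != r0 -> g r = 0) ->
  \sum_(lo <= r < hi) g r = if (lo <= r0 < hi)%N then g r0 else 0.
Proof.
move=> H; case: ifP => h.
  rewrite (bigD1_seq r0) ?mem_index_iota ?iota_uniq //= big1 ?addr0 // => r; exact: H.
rewrite big1_seq // => r /andP [_]; rewrite mem_index_iota => hr; apply: H.
by apply/eqP => e; rewrite -e hr in h.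
Qed.

Lemma invol_sum (I : finType) (P : pred I) (f : I -> I) (w : I -> int) :
  (forall i, P i -> [/\ P (f i), f (f i) = i & w (f i) = - w i]) -> \sum_(i | P i) w i = 0.
Proof.
move=> H.
have e1 : \sum_(i | P i) w i = \sum_(i | P i) w (f i).
  rewrite (reindex_onto f f); last by move=> i /H [].
  apply: eq_bigl => i; apply/idP/idP.
    case/andP => hp /eqP e; have [hp2 _ _] := H _ hp; by rewrite e in hp2.
  move=> hp; case: (H _ hp) => hp' e _; by rewrite hp' e eqxx.
have e2 : \sum_(i | P i) w (f i) = - \sum_(i | P i) w i.
  by rewrite -sumrN; apply: eq_bigr => i /H [].
move: e1; rewrite e2; lia.
Qed.

Local Close Scope ring_scope.

Section H.
Variable N : nat.
Local Notation T := {set 'I_N.+1}.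

Lemma fixed_char (S : T) a : a != 0 -> is_distinct_partition_of S -> fixedb S ->
  m_part S + #|S| = a ->
  exists k, 0 < k /\ ((a = 3 * k - 1 /\ 2 * N = k * (3 * k - 1) /\ S = Iv N k (k + k - 1))
     \/ (a = 3 * k /\ 2 * N = k * (3 * k + 1) /\ S = Iv N k.+1 (k.+1 + k - 1))).
Proof.
move=> ha hv hf hmn.
have hne : S != set0.
  apply/negP => /eqP e; move: hmn; rewrite e /m_part big_set0 cards0 => e'.
  by move: ha; rewrite -e'.
move: hf; rewrite /fixedb (negbTE hne) /= => /andP [/eqP hw hsk].
case/andP: hv; rewrite mem0E => h0 /eqP hN.
move: hw hsk hmn.
set m := m_part S; set s := smin S; set k := kr S => hw hsk hmn.
have hm : mem_nat S m := max_in hne.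
have hs : mem_nat S s := smin_in hne.
have hle : forall i, mem_nat S i -> i <= m by move=> i; apply: max_ge.
have hsle : forall i, mem_nat S i -> s <= i by move=> i; apply: smin_le.
have hpos : forall i, mem_nat S i -> 0 < i.
  by move=> [|i] //; rewrite (negbTE h0).
have hkm : k <= m := run_le _ _.
have hrun : forall j, j < k -> mem_nat S (m - j) by move=> j; apply: run_in.
have hm1 := hpos _ hm; have hs1 := hpos _ hs.
have hk1 : 0 < k.
  by apply: run_ge => // j; rewrite ltnS leqn0 => /eqP ->; rewrite subn0.
have hmN := mem_nat_le hm.
have hb : s + k <= N.+1 by nlia.
have hSI : S = Iv N s (s + k - 1).
  apply: set_eq_nat => i; rewrite memIv //.
  apply/idP/idP => [hi|/andP [h1 h2]].
    by apply/andP; split; [exact: hsle | have := hle _ hi; nlia].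
  have := hrun (m - i) ltac:(nlia).
  by have -> : m - (m - i) = i by nlia.
have [_ hsum hcard _ _] := Iv_props hs1 hk1 hb.
rewrite -hSI in hsum hcard.
rewrite hN in hsum.
exists k; split => //.
case/orP: hsk => /eqP e.
- left; split; first by nlia.
  split; first by rewrite e in hsum; nlia.
  by rewrite hSI e.
- right; split; first by nlia.
  split; first by rewrite e in hsum; nlia.
  by rewrite hSI e.
Qed.

End H.
Import GRing.Theory.



Local Open Scope ring_scope.

Theorem mainTheorem5 : forall a N : nat, lhs_coef a N = rhs_coef a N.
Proof.
move=> a N.
rewrite /lhs_coef (bigID (@fixedb N)) /=.
rewrite [X in _ + X](@invol_sum _ _ (@fr N)); last first.
  move=> S /andP [/andP [hv /eqP hmn] hnf]; have [hv' hnf' hfr hm hc] := invol hv hnf.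
  split => //.
    by rewrite hv' hnf' andbT /=; apply/eqP; rewrite /n_part hm.
  by case: hc => e; rewrite /n_part; [rewrite -e exprS mulN1r opprK | rewrite e exprS mulN1r].
rewrite addr0 /rhs_coef.
case: (eqVneq a 0%N) => [-> | ha].
  have hr : \sum_(1 <= r < N.+1) (-1) ^+ r * (((0 == 3 * r - 1)%N && (N == r * (3 * r - 1) %/ 2)%N)%:R
      + ((0 == 3 * r)%N && (N == r * (3 * r + 1) %/ 2)%N)%:R) = 0 :> int.
    rewrite big_nat_cond big1 // => r /andP [/andP [h1 _] _].
    rewrite (_ : (0 == 3 * r - 1)%N = false); last by apply/eqP; nlia.
    rewrite (_ : (0 == 3 * r)%N = false); last by apply/eqP; nlia.
    by rewrite /= mulr0n addr0 mulr0.
  rewrite hr addr0.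
  case: (eqVneq N 0%N) => [hN0 | hN0].
    subst N.
    rewrite (eq_bigl (pred1 set0)); last first.
      move=> S /=; apply/idP/idP => [/andP [/andP [_ hmn] _]|/eqP ->].
        by apply/eqP; apply: cards0_eq; rewrite /n_part in hmn; nlia.
      by rewrite /is_distinct_partition_of /N_part /m_part /n_part !big_set0 cards0 in_set0 /fixedb !eqxx.
    by rewrite big_pred1_eq /n_part cards0 expr0.
  rewrite big_pred0; last first.
    move=> S /=; apply/negP => /andP [/andP [/andP [_ hN] hmn] _].
    have S0 : S = set0 by apply: cards0_eq; rewrite /n_part in hmn; nlia.
    by move: hN; rewrite S0 /N_part big_set0 eq_sym (negbTE hN0).
  by rewrite /= mulr0n.
rewrite /= mulr0n add0r.
set r1 := (a.+1 %/ 3)%N; set r2 := (a %/ 3)%N.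
case b1 : [&& (0 < r1)%N, a == (3 * r1 - 1)%N & (2 * N == r1 * (3 * r1 - 1))%N].
  case/and3P: b1 => hr1 /eqP ea /eqP eN.
  have hb : (r1 + r1 <= N.+1)%N by prune; nia.
  have [h0 hsum hcard hmax [hsmin hkr]] := Iv_props hr1 hr1 hb.
  rewrite (eq_bigl (pred1 (Iv N r1 (r1 + r1 - 1)))); last first.
    move=> S /=; apply/idP/idP => [/andP [/andP [hv /eqP hmn] hf]|/eqP ->].
      have [k [hk [[ea' [eN' eS]]|[ea' [eN' eS]]]]] := @fixed_char N S a ha hv hf hmn.
        have ek : k = r1 by nlia.
        by rewrite eS ek.
      exfalso; nlia.
    rewrite /is_distinct_partition_of /fixedb mem0E h0 /= hsmin hkr hmax /n_part hcard.
    apply/andP; split; first by apply/andP; split; apply/eqP; nlia.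
    apply/orP; right; rewrite eqxx orTb andbT; apply/eqP; nlia.
  rewrite big_pred1_eq /n_part hcard.
  rewrite (@sum_single 1 N.+1 r1).
    rewrite (_ : (1 <= r1 < N.+1)%N = true); last by apply/andP; split; nlia.
    rewrite p1E p2E (_ : (a == 3 * r1 - 1)%N = true); last by apply/eqP.
    rewrite (_ : (2 * N == r1 * (3 * r1 - 1))%N = true); last by apply/eqP.
    rewrite (_ : (a == 3 * r1)%N = false); last by apply/eqP; nlia.
    by rewrite /= mulr1n mulr0n addr0 mulr1.
  move=> r hr /=; rewrite p1E p2E.
  rewrite (_ : (a == 3 * r - 1)%N = false); last by apply/eqP => e; move/eqP: hr; nlia.
  rewrite (_ : (a == 3 * r)%N = false); last by apply/eqP; nlia.
  by rewrite /= mulr0n addr0 mulr0.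
case b2 : [&& (0 < r2)%N, a == (3 * r2)%N & (2 * N == r2 * (3 * r2 + 1))%N].
  case/and3P: b2 => hr2 /eqP ea /eqP eN.
  have hb : (r2.+1 + r2 <= N.+1)%N by prune; nia.
  have [h0 hsum hcard hmax [hsmin hkr]] := Iv_props (ltn0Sn r2) hr2 hb.
  rewrite (eq_bigl (pred1 (Iv N r2.+1 (r2.+1 + r2 - 1)))); last first.
    move=> S /=; apply/idP/idP => [/andP [/andP [hv /eqP hmn] hf]|/eqP ->].
      have [k [hk [[ea' [eN' eS]]|[ea' [eN' eS]]]]] := @fixed_char N S a ha hv hf hmn.
        exfalso; nlia.
      have ek : k = r2 by nlia.
      by rewrite eS ek.
    rewrite /is_distinct_partition_of /fixedb mem0E h0 /= hsmin hkr hmax /n_part hcard.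
    apply/andP; split; first by apply/andP; split; apply/eqP; nlia.
    apply/orP; right; rewrite eqxx orbT andbT; apply/eqP; nlia.
  rewrite big_pred1_eq /n_part hcard.
  rewrite (@sum_single 1 N.+1 r2).
    rewrite (_ : (1 <= r2 < N.+1)%N = true); last by apply/andP; split; nlia.
    rewrite p1E p2E (_ : (a == 3 * r2)%N = true); last by apply/eqP.
    rewrite (_ : (2 * N == r2 * (3 * r2 + 1))%N = true); last by apply/eqP.
    rewrite (_ : (a == 3 * r2 - 1)%N = false); last by apply/eqP; nlia.
    by rewrite /= mulr1n mulr0n add0r mulr1.
  move=> r hr /=; rewrite p1E p2E.
  rewrite (_ : (a == 3 * r - 1)%N = false); last by apply/eqP; nlia.
  rewrite (_ : (a == 3 * r)%N = false); last by apply/eqP => e; move/eqP: hr; nlia.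
  by rewrite /= mulr0n addr0 mulr0.
rewrite big_pred0; last first.
  move=> S /=; apply/negP => /andP [/andP [hv /eqP hmn] hf].
  have [k [hk [[ea' [eN' eS]]|[ea' [eN' eS]]]]] := @fixed_char N S a ha hv hf hmn.
    have ek : r1 = k by rewrite /r1; nlia.
    move/negbT: b1 => /negP; apply; rewrite ek; apply/and3P; split; [|apply/eqP|apply/eqP]; nlia.
  have ek : r2 = k by rewrite /r2; nlia.
  move/negbT: b2 => /negP; apply; rewrite ek; apply/and3P; split; [|apply/eqP|apply/eqP]; nlia.
rewrite big1_seq // => r _; rewrite p1E p2E.
case: (boolP ((a == 3 * r - 1)%N && (2 * N == r * (3 * r - 1))%N)) => h1.
  case/andP: h1 => /eqP e1 /eqP e2.
  have hr0 : (0 < r)%N by nlia.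
  have ek : r1 = r by rewrite /r1; nlia.
  move/negbT: b1 => /negP; case; rewrite ek; apply/and3P; split; [|apply/eqP|apply/eqP]; nlia.
case: (boolP ((a == 3 * r)%N && (2 * N == r * (3 * r + 1))%N)) => h2.
  case/andP: h2 => /eqP e1 /eqP e2.
  have hr0 : (0 < r)%N by nlia.
  have ek : r2 = r by rewrite /r2; nlia.
  move/negbT: b2 => /negP; case; rewrite ek; apply/and3P; split; [|apply/eqP|apply/eqP]; nlia.
by rewrite /= mulr0n addr0 mulr0.
Qed.
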